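(* Let $\mathcal{H}$ be a PICOD hypergraph with $n\ge1$ clients having request-sets $R_1,\dots,R_n$. Then $\beta(\mathcal{H})=1$ if and only if there exist indices $d_1\in R_1,\dots,d_n\in R_n$ such that the set $\{d_1,\dots,d_n\}$ is an independent set of $\mathcal{H}$.
   Context: PICOD problem: a server holds $m$ messages $b_1,\dots,b_m\in\mathbb{F}_q$; there are $n$ clients, client $i$ having side-information $\{b_j: j\in S_i\}$, $S_i\subseteq[m]$, and request-set $R_i=[m]\setminus S_i$ (assumed non-empty); client $i$ wants any one message $b_j$ with $j\in R_i$. A PICOD scheme of length $\ell$ over $\mathbb{F}_q$ is an encoding map $\phi:\mathbb{F}_q^m\to\mathbb{F}_q^\ell$ such that for every client $i$ there is an index $j_i\in R_i$ and a function $\psi_i$ with $\psi_i(\phi(b),(b_k)_{k\in S_i})=b_{j_i}$ for all $b\in\mathbb{F}_q^m$. The PICOD hypergraph $\mathcal{H}$ has vertex set $[m]$ and edge set $\{R_i:i\in[n]\}$. $\beta_q(\mathcal{H})$ is the minimum length of a PICOD scheme over $\mathbb{F}_q$, and $\beta(\mathcal{H})=\min_q\beta_q(\mathcal{H})$ over all prime powers $q$. An independent set of $\mathcal{H}$ is a set of vertices no two of which lie in a common edge. *)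

(* Defs.v *)
From HB Require Import structures.
From mathcomp Require Import all_boot all_order all_algebra all_field.
Set Implicit Arguments. Unset Strict Implicit. Unset Printing Implicit Defensive.
Import GRing.Theory.
Local Open Scope ring_scope.

(* A PICOD instance: m messages indexed by 'I_m, n clients indexed by 'I_n,
   client i has request-set R i; its side-information set is ~: R i. *)

Definition side_info (F : finFieldType) (m n : nat) (R : 'I_n -> {set 'I_m})
  (i : 'I_n) (b : {ffun 'I_m -> F}) : {ffun 'I_m -> F} :=
  [ffun k => if k \in R i then 0 else b k].

Definition picod_scheme (F : finFieldType) (m n : nat) (R : 'I_n -> {set 'I_m})
  (ell : nat) (phi : {ffun 'I_m -> F} -> {ffun 'I_ell -> F}) : Prop :=
  forall i : 'I_n, exists2 j : 'I_m, j \in R i &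
    exists psi : {ffun 'I_ell -> F} -> {ffun 'I_m -> F} -> F,
      forall b : {ffun 'I_m -> F}, psi (phi b) (side_info R i b) = b j.

Definition has_picod_scheme (m n : nat) (R : 'I_n -> {set 'I_m}) (ell : nat) : Prop :=
  exists (F : finFieldType) (phi : {ffun 'I_m -> F} -> {ffun 'I_ell -> F}),
    picod_scheme R phi.

(* beta(H) = min_q beta_q(H) = 1, written out: length 1 is achievable
   over some field, length 0 over none. *)
Definition beta_eq1 (m n : nat) (R : 'I_n -> {set 'I_m}) : Prop :=
  has_picod_scheme R 1 /\ ~ has_picod_scheme R 0.

Definition independent (m n : nat) (R : 'I_n -> {set 'I_m}) (D : {set 'I_m}) : Prop :=
  forall x y, x \in D -> y \in D -> x != y -> forall i, ~ (x \in R i /\ y \in R i).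

(* Main.v *)
Require Import Defs.
From mathcomp Require Import all_boot all_order all_algebra all_field.
Set Implicit Arguments. Unset Strict Implicit. Unset Printing Implicit Defensive.

Section Helpers.
Import GRing.Theory.
Local Open Scope ring_scope.
Variables (m n : nat) (R : 'I_n -> {set 'I_m}).

Definition upd (F : finFieldType) (b : {ffun 'I_m -> F}) (k : 'I_m) (c : F) :
  {ffun 'I_m -> F} := [ffun t => if t == k then c else b t].

Lemma side_upd (F : finFieldType) (i : 'I_n) (b : {ffun 'I_m -> F}) (k : 'I_m) (c : F) : k \in R i ->
  side_info R i (upd b k c) = side_info R i b.
Proof.
move=> kR; apply/ffunP=> t; rewrite !ffunE.
case: ifP => // tR; case: eqP => // Etk; by rewrite Etk kR in tR.
Qed.

Lemma upd_id (F : finFieldType) (b : {ffun 'I_m -> F}) k : upd b k (b k) = b.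
Proof. by apply/ffunP=> t; rewrite ffunE; case: eqP => // ->. Qed.

Lemma upd_at (F : finFieldType) (b : {ffun 'I_m -> F}) k c : upd b k c k = c.
Proof. by rewrite ffunE eqxx. Qed.

Lemma upd_ne (F : finFieldType) (b : {ffun 'I_m -> F}) k c t : t != k -> upd b k c t = b t.
Proof. by move=> /negbTE H; rewrite ffunE H. Qed.

Variables (F : finFieldType) (phi : {ffun 'I_m -> F} -> {ffun 'I_1 -> F}).

Lemma keyA i z (psi : {ffun 'I_1 -> F} -> {ffun 'I_m -> F} -> F) :
  z \in R i -> (forall b : {ffun 'I_m -> F}, psi (phi b) (side_info R i b) = b z) ->
  forall (b : {ffun 'I_m -> F}) (c : F), c != b z -> phi (upd b z c) != phi b.
Proof.
move=> zR Hpsi b c nc; apply/eqP=> E.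
have := Hpsi (upd b z c); rewrite E side_upd // Hpsi upd_at => H.
by rewrite H eqxx in nc.
Qed.

Lemma keyB i z (psi : {ffun 'I_1 -> F} -> {ffun 'I_m -> F} -> F) :
  z \in R i -> (forall b : {ffun 'I_m -> F}, psi (phi b) (side_info R i b) = b z) ->
  forall y, y \in R i -> y != z -> forall (b : {ffun 'I_m -> F}) (c : F), phi (upd b y c) = phi b.
Proof.
move=> zR Hpsi y yR yz b c.
pose f := fun c' : F => phi (upd b z c').
have finj : injective f.
  move=> c1 c2 E.
  have := Hpsi (upd b z c1); have := Hpsi (upd b z c2).
  rewrite !side_upd // !upd_at => <- <-; by rewrite /f in E; rewrite E.
have : phi (upd b y c) \in codom f.
  apply: (inj_card_onto finj); by rewrite card_ffun card_ord expn1.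
case/codomP=> c' Ec'.
have H1 := Hpsi (upd b y c); have H2 := Hpsi (upd b z c').
rewrite side_upd // in H1; rewrite side_upd // in H2.
rewrite Ec' /f H2 upd_at upd_ne // in H1.
by rewrite Ec' /f H1 upd_id.
by rewrite eq_sym.
Qed.

End Helpers.

Theorem lemma3 (m n : nat) (R : 'I_n -> {set 'I_m})
  (Hn : (0 < n)%N) (HR : forall i, R i != set0) :
  beta_eq1 R <->
  exists d : 'I_n -> 'I_m, (forall i, d i \in R i) /\ independent R [set d i | i : 'I_n].
Proof.
split.
- case=> [[F [phi Hs]] _].
  have [d Hd] : exists d : 'I_n -> 'I_m, forall i, d i \in R i /\
      exists psi : {ffun 'I_1 -> F} -> {ffun 'I_m -> F} -> F,
      forall b : {ffun 'I_m -> F}, psi (phi b) (side_info R i b) = b (d i).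
    have [f Hf1 Hf2] := fin_all_exists2 Hs; by exists f => i; split.
  exists d; split; first by move=> i; case: (Hd i).
  have key : forall a i, d a \in R i -> d a = d i.
    move=> a i daR; apply/eqP; apply/negPn/negP => ne.
    have [diR [psi Hpsi]] := Hd i.
    have [daR' [psa Hpsa]] := Hd a.
    have HB := keyB diR Hpsi daR ne.
    have HA := keyA daR' Hpsa; move: {HA}(HA (0%R : {ffun 'I_m -> F}) (1%R : F)) => HA.
    rewrite HB eqxx ffunE in HA.
    by move: (HA (@GRing.oner_neq0 F)).
  move=> x y /imsetP[a _ ->] /imsetP[b _ ->] ne i [xa yb].
  by rewrite (key _ _ xa) (key _ _ yb) eqxx in ne.
- case=> d [dR Hind]; split; last first.
    case=> F [phi Hs].
    have [j jR [psi Hpsi]] := Hs (Ordinal Hn).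
    have H0 := Hpsi (0%R : {ffun 'I_m -> F}); have H1 := Hpsi (upd (0%R : {ffun 'I_m -> F}) j 1%R).
    rewrite side_upd // upd_at in H1.
    have E : phi (upd (0%R : {ffun 'I_m -> F}) j 1%R) = phi 0%R by apply/ffunP => -[].
    rewrite E H0 ffunE in H1.
    by move/eqP: H1; rewrite eq_sym GRing.oner_eq0.
  pose D := [set d i | i : 'I_n].
  exists 'F_2%type, (fun b => [ffun _ : 'I_1 => (\sum_(k in D) b k)%R]).
  move=> i; exists (d i) => //.
  exists (fun v s => (v ord0 - \sum_(k in D | k != d i) s k)%R) => b.
  rewrite ffunE (bigD1 (d i)) ?imset_f //=.
  have -> : (\sum_(k in D | k != d i) side_info R i b k =
             \sum_(k in D | k != d i) b k)%R.
    apply: eq_bigr => k /andP[kD kne]; rewrite ffunE; case: ifP => // kR.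
    exfalso; apply: (Hind k (d i) kD (imset_f _ _) kne i); split=> //.
  by rewrite GRing.addrK.
Qed.
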